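(* Let $n$ be an integer with $n\neq\pm1$ such that $3n$ is not a square. Then the polynomial $P_n(X)=X^3-3(n+1)X+2(n+1)\in\mathbb Q[X]$ has Galois group over $\mathbb Q$ isomorphic to $S_3$. *)

(* Defs.v *)
From HB Require Import structures.
From mathcomp Require Import all_boot all_order all_algebra all_fingroup all_solvable all_field.
Set Implicit Arguments. Unset Strict Implicit. Unset Printing Implicit Defensive.
Import GRing.Theory Num.Theory.
Local Open Scope ring_scope.

Definition Pn (n : int) : {poly rat} :=
  'X^3 - ((3 * (n + 1))%:~R) *: 'X + ((2 * (n + 1))%:~R)%:P.

(* Main.v *)
Require Import Defs.
From HB Require Import structures.
From mathcomp Require Import all_boot all_order all_algebra all_fingroup all_solvable all_field.
From mathcomp Require Import zify ring lra.
Import GRing.Theory Num.Theory.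
Local Open Scope ring_scope.
Lemma den1 (x : rat) (e : nat) (k : int) : numq x ^+ e.+1 = k * denq x -> denq x = 1.
Proof.
move=> H.
have d1 : (`|denq x| %| `|numq x| ^ e.+1)%N by rewrite -abszX H abszM dvdn_mull.
have c1 : coprime `|denq x| (`|numq x| ^ e.+1) by rewrite coprimeXr // coprime_sym coprime_num_den.
have : `|denq x|%N = 1%N by move: c1; rewrite /coprime (gcdn_idPl d1) => /eqP.
by case: (denq x) (denq_gt0 x) => [d|d] //= _ ->.
Qed.

Lemma int_root (m t : int) : m ^+ 3 = t * (3 * m - 2) ->
  (m == 0) && (t == 0) || (m == 1) && (t == 1) || (m == 2) && (t == 2) || (m == -2) && (t == 1).
Proof.
move=> H.
have H8 : (3 * m - 2) * (27 * t - 9 * m ^+ 2 - 6 * m - 4) = 8.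
  have E : (3 * m - 2) * (27 * t - 9 * m ^+ 2 - 6 * m - 4) - 8 = - 27 * (m ^+ 3 - t * (3 * m - 2)) by ring.
  by apply/eqP; rewrite -subr_eq0 E H subrr ?mulr0 ?oppr0.
have hb : -2 <= m <= 3.
  have kn0 : (27 * t - 9 * m ^+ 2 - 6 * m - 4) != 0.
    by apply/eqP => k0; move: H8; rewrite k0 mulr0.
  nia.
move: hb => /andP [h1 h2].
have : m = -2 \/ m = -1 \/ m = 0 \/ m = 1 \/ m = 2 \/ m = 3 by lia.
by move=> [|[|[|[|[|]]]]] me; rewrite me in H *; lia.
Qed.
Lemma rat_root (x : rat) (t : int) : x ^+ 3 = t%:~R * (3 * x - 2) ->
   (numq x) ^+ 3 = t * (3 * numq x - 2).
Proof.
move=> H.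
have bn0 : ((denq x)%:~R : rat) != 0 by rewrite intr_eq0 denq_neq0.
have xE : x = (numq x)%:~R / (denq x)%:~R by rewrite divq_num_den.
have E : numq x ^+ 3 = t * (3 * numq x - 2 * denq x) * denq x ^+ 2.
  apply: (intr_inj (R := rat)).
  rewrite !(rmorphM, rmorphB, rmorphXn) /=.
  move: H; rewrite {1 2}xE => H.
  set a : rat := (numq x)%:~R in H *; set b : rat := (denq x)%:~R in H bn0 *.
  have e1 : a * (a * a) = (a / b) ^+ 3 * b ^+ 3 by field.
  by rewrite e1 H ?rmorph_nat; field.
have b1 : denq x = 1.
  apply: (@den1 x 2 (t * (3 * numq x - 2 * denq x) * denq x)).
  by rewrite E; ring.
by rewrite E b1; ring.
Qed.

Lemma rat_sq (x : rat) (k : int) : x ^+ 2 = k%:~R -> k = numq x ^+ 2.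
Proof.
move=> H.
have bn0 : ((denq x)%:~R : rat) != 0 by rewrite intr_eq0 denq_neq0.
have xE : x = (numq x)%:~R / (denq x)%:~R by rewrite divq_num_den.
have E : numq x ^+ 2 = k * denq x ^+ 2.
  apply: (intr_inj (R := rat)).
  rewrite !(rmorphM, rmorphB, rmorphXn) /=.
  move: H; rewrite {1}xE => H.
  set a : rat := (numq x)%:~R in H *; set b : rat := (denq x)%:~R in H bn0 *.
  transitivity ((a / b) ^+ 2 * b ^+ 2); first by field.
  by rewrite H.
have b1 : denq x = 1.
  apply: (@den1 x 1 (k * denq x)).
  by rewrite E; ring.
by rewrite E b1; ring.
Qed.
Lemma size_Pn n : size (Pn n) = 4%N.
Proof.
rewrite /Pn -addrA size_polyDl ?size_polyXn //.
apply: (leq_ltn_trans (size_polyD _ _)).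
rewrite size_polyN gtn_max (leq_ltn_trans (size_scale_leq _ _)) ?size_polyX //.
by rewrite (leq_ltn_trans (size_polyC_leq1 _)).
Qed.

Lemma horner_Pn n x : (Pn n).[x] = x ^+ 3 - (3 * (n + 1))%:~R * x + (2 * (n + 1))%:~R.
Proof. by rewrite /Pn !hornerE. Qed.

Lemma Pn_irr n : n != 1 -> n != -1 -> ~ (exists m : int, 3 * n = m ^+ 2) ->
  irreducible_poly (Pn n).
Proof.
move=> n1 nm1 nsq; apply: cubic_irreducible; first by rewrite size_Pn.
move=> x; apply/negP; rewrite /root horner_Pn => /eqP H.
have : x ^+ 3 = (n + 1)%:~R * (3 * x - 2).
  apply/eqP; rewrite -subr_eq0; apply/eqP; rewrite -[RHS]H.
  rewrite !rmorphM !rmorphD /=; ring.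
move/rat_root/int_root.
case/orP=> [/orP[/orP[|]|]|] /andP[_ /eqP ht].
- by move/eqP: nm1; apply; lia.
- by apply: nsq; exists 0; lia.
- by move/eqP: n1; apply; lia.
- by apply: nsq; exists 0; lia.
Qed.

Lemma natrL_eq0 (L : fieldExtType rat) (k : nat) : ((k%:R : L) == 0) = (k == 0%N).
Proof. by rewrite -(rmorph_nat (in_alg L)) fmorph_eq0 pnatr_eq0. Qed.

Lemma intrL_eq0 (L : fieldExtType rat) (k : int) : ((k%:~R : L) == 0) = (k == 0).
Proof. by rewrite -(rmorph_int (in_alg L)) fmorph_eq0 intr_eq0. Qed.

Lemma Pn_monic n : Pn n \is monic.
Proof.
rewrite /Pn -addrA monicE lead_coefDl ?lead_coefXn // size_polyXn.
apply: (leq_ltn_trans (size_polyD _ _)).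
rewrite size_polyN gtn_max (leq_ltn_trans (size_scale_leq _ _)) ?size_polyX //.
by rewrite (leq_ltn_trans (size_polyC_leq1 _)).
Qed.

Lemma map_Pn (L : fieldExtType rat) n :
  map_poly (in_alg L) (Pn n) = 'X^3 - ((3 * (n + 1))%:~R) *: 'X + ((2 * (n + 1))%:~R)%:P.
Proof.
rewrite /Pn rmorphD rmorphB /= map_polyXn map_polyZ map_polyX map_polyC /=.
by rewrite !scaler_int.
Qed.

Theorem lemma5p1 (n : int) (L : splittingFieldType rat) (E : {subfield L}) :
  n != 1 -> n != -1 -> ~ (exists m : int, 3 * n = m ^+ 2) ->
  splittingFieldFor 1%VS (map_poly (in_alg L) (Pn n)) E ->
  ('Gal(E / 1%VS) \isog [set: 'S_3])%g.
Proof.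
move=> n1 nm1 nsq hsplit; case: (hsplit) => rs Hrs defE.
have irrP := @Pn_irr n n1 nm1 nsq.
set pL := map_poly (in_alg L) (Pn n) in hsplit Hrs.
have pL_eq : pL = \prod_(z <- rs) ('X - z%:P).
  by apply/eqP; rewrite -eqp_monic ?map_monic ?Pn_monic ?monic_prod_XsubC.
have szrs : size rs = 3%N.
  have := eqp_size Hrs; rewrite size_prod_XsubC /pL size_map_poly size_Pn.
  by case.
move: defE pL_eq; case: rs szrs {Hrs} => [|a [|b [|c [|]]]] // _ defE pL_eq.
set T : L := (n + 1)%:~R.
have hev : forall y, y ^+ 3 - (3 * T) * y + 2 * T = (y - a) * ((y - b) * (y - c)).
  move=> y; have := congr1 (fun p => p.[y]) pL_eq.
  rewrite /pL map_Pn !big_cons big_nil mulr1 !hornerE /T !rmorphM /=.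
  by move=> ->.
have two0 : (2 : L) != 0 by rewrite natrL_eq0.
have e1 : c = - (a + b).
  have h : 2 * (a + b + c) = 0.
    have -> : 2 * (a + b + c) = - ((1 - a) * ((1 - b) * (1 - c)) + (-1 - a) * ((-1 - b) * (-1 - c)))
         + 2 * ((0 - a) * ((0 - b) * (0 - c))) by ring.
    rewrite -!hev; ring.
  move/eqP: h; rewrite mulf_eq0 (negbTE two0) /= => /eqP h.
  by rewrite (_ : c = (a + b + c) - (a + b)); [rewrite h sub0r | ring].
have e2 : a * b + b * c + c * a = - (3 * T).
  apply: (mulfI two0).
  have -> : 2 * (a * b + b * c + c * a) = ((1 - a) * ((1 - b) * (1 - c)) - (-1 - a) * ((-1 - b) * (-1 - c))) - 2 by rewrite e1; ring.
  rewrite -!hev; ring.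
have e3 : a * b * c = - (2 * T).
  have -> : a * b * c = - ((0 - a) * ((0 - b) * (0 - c))) by ring.
  rewrite -hev; ring.
set N : L := n%:~R.
have TN : T = N + 1 by rewrite /T /N rmorphD.
set d := (a - b) * (a - c) * (b - c).
have d2 : d ^+ 2 = (108 * n * (n + 1) ^+ 2)%:~R.
  transitivity (- 4 * (a * b + b * c + c * a) ^+ 3 - 27 * (a * b * c) ^+ 2).
    by rewrite /d e1; ring.
  rewrite e2 e3 /T; ring.
have n0 : n != 0 by apply: contra_not_neq nsq => ->; exists 0.
have t0 : n + 1 != 0 by apply: contra_neq nm1 => h; apply/eqP; rewrite -subr_eq0 opprK h.
have dn0 : d != 0.
  apply: contra_neq (_ : d ^+ 2 != 0) => [->|]; first by rewrite expr0n.
  by rewrite d2 intrL_eq0 !mulf_neq0 ?expf_neq0.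
have uab : [&& a != b, a != c & b != c].
  by move: dn0; rewrite /d !mulf_eq0 !negb_or !subr_eq0 => /andP[/andP[-> ->] ->].
have urs : uniq [:: a; b; c].
  by case/and3P: uab => ab ac bc; rewrite /= !inE negb_or ab ac bc.
have galE : galois 1 E.
  apply/splitting_galoisField; exists pL; split => //; first exact: alg_polyOver.
  by rewrite pL_eq separable_prod_XsubC.
have cardG : #|'Gal(E / 1%VS)%g| = \dim E.
  by rewrite -(galois_dim galE) dimv1 divn1.
have aE : a \in E by rewrite -defE seqv_sub_adjoin // inE eqxx.
have bE : b \in E by rewrite -defE seqv_sub_adjoin // !inE eqxx ?orbT.
have cE : c \in E by rewrite -defE seqv_sub_adjoin // !inE eqxx ?orbT.
have rootA : root pL a by rewrite pL_eq root_prod_XsubC inE eqxx.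
have d3 : (3 %| \dim E)%N.
  have mdv : minPoly 1 a %| pL := minPoly_dvdp (alg_polyOver _ _) rootA.
  have [q qE] := polyOver1P (minPolyOver 1 a).
  have qdv : q %| Pn n by rewrite -(dvdp_map (in_alg L)) -qE.
  have szq : size q = (adjoin_degree 1 a).+1.
    by rewrite -(size_map_poly (in_alg L)) -qE size_minPoly.
  have adeg0 : (0 < adjoin_degree 1 a)%N.
    by rewrite adjoin_degreeE dimv1 divn1 adim_gt0.
  have qP : q %= Pn n.
    by apply: (irrP.2 q) => //; rewrite szq eqSS -lt0n adeg0.
  have ad3 : adjoin_degree 1 a = 3%N.
    by move: (eqp_size qP); rewrite szq size_Pn => /succn_inj.
  have := @field_dimS _ _ <<1; a>>%AS E; rewrite sub_adjoin1v aE dim_Fadjoin ad3 dimv1 muln1.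
  by apply.
have dE : d \in E by rewrite /d !(rpredM, rpredB).
have dn1 : d \notin 1%VS.
  apply/negP => /vlineP [k dk].
  have k2 : k ^+ 2 = (108 * n * (n + 1) ^+ 2)%:~R.
    apply: (fmorph_inj (in_alg L)); rewrite rmorphXn rmorph_int /= -d2 dk.
    done.
  have t0' : ((n + 1)%:~R : rat) != 0 by rewrite intr_eq0.
  set x := k / (6 * (n + 1)%:~R).
  have : x ^+ 2 = (3 * n)%:~R.
    rewrite /x expr_div_n k2.
    move: t0'; set t' : rat := (n + 1)%:~R => t0'.
    have -> : ((108 * n * (n + 1) ^+ 2)%:~R : rat) = 108 * n%:~R * t' ^+ 2.
      by rewrite /t'; ring.
    rewrite [RHS]rmorphM /=. field.
    by move: t0'; rewrite /t' rmorphD.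
  by move/rat_sq => h; apply: nsq; exists (numq x).
have d2E : (2 %| \dim E)%N.
  set D : L := (108 * n * (n + 1) ^+ 2)%:~R.
  have D1 : D \in 1%VS.
    by apply/vlineP; exists ((108 * n * (n + 1) ^+ 2)%:~R); rewrite scaler_int.
  have pO : 'X^2 - D%:P \is a polyOver 1%VS by rewrite polyOverXnsubC.
  have rt : root ('X^2 - D%:P) d by rewrite /root !hornerE d2 subrr.
  have mdv := minPoly_dvdp pO rt.
  have pn0 : 'X^2 - D%:P != 0 by rewrite -size_poly_eq0 size_XnsubC.
  have := dvdp_leq pn0 mdv; rewrite size_minPoly size_XnsubC // ltnS => dle.
  have adeg0 : (0 < adjoin_degree 1 d)%N.
    by rewrite adjoin_degreeE dimv1 divn1 adim_gt0.
  have adn1 : adjoin_degree 1 d != 1%N by rewrite adjoin_deg_eq1.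
  have ad2 : adjoin_degree 1 d = 2%N.
    by move: dle adeg0 adn1; case: (adjoin_degree 1 d) => [|[|[|]]].
  have := @field_dimS _ _ <<1; d>>%AS E; rewrite sub_adjoin1v dE dim_Fadjoin ad2 dimv1 muln1.
  by apply.
have d6 : (6 %| \dim E)%N by rewrite (@Gauss_dvd 2 3) // d2E d3.
set r := [:: a; b; c].
have rE : forall z, z \in r -> z \in E.
  by move=> z; rewrite !inE => /or3P[] /eqP ->.
have nthE : forall i : 'I_3, nth 0 r i \in E by move=> i; apply/rE/mem_nth.
have nth_inj : forall i j : 'I_3, nth 0 r i = nth 0 r j -> i = j.
  move=> i j /eqP; rewrite nth_uniq // => /eqP; exact: val_inj.
have gr : forall g, g \in 'Gal(E / 1%VS)%g -> forall z, z \in r -> g z \in r.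
  move=> g gG z zr; have zE := rE z zr.
  have hk : kHom 1 E g by rewrite -gal_kHom ?sub1v.
  have rz : root pL z by rewrite pL_eq root_prod_XsubC.
  have := kHom_root hk (alg_polyOver _ _) zE rz.
  by rewrite (fixedPoly_gal (sub1v _) gG) ?alg_polyOver // -/pL pL_eq root_prod_XsubC.
have ginj : forall g : gal_of E, injective g.
  by move=> g; apply: can_inj (lker0_lfunK (AEnd_lker0 g)).
pose sig (g : gal_of E) : {ffun 'I_3 -> 'I_3} := [ffun i : 'I_3 => inord (index (g (nth 0 r i)) r)].
pose f (g : gal_of E) : {perm 'I_3} := insubd (1%g : {perm 'I_3}) (sig g).
have sigE : forall g, g \in 'Gal(E / 1%VS)%g -> forall i, nth 0 r (sig g i) = g (nth 0 r i).
  move=> g gG i; rewrite ffunE inordK ?index_mem ?gr ?mem_nth //.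
  by rewrite nth_index // gr ?mem_nth.
have siginj : forall g, g \in 'Gal(E / 1%VS)%g -> injectiveb (sig g).
  move=> g gG; apply/injectiveP => i j h; apply: nth_inj; apply: (ginj g).
  by rewrite -!sigE // h.
have fE : forall g, g \in 'Gal(E / 1%VS)%g -> forall i, f g i = sig g i.
  by move=> g gG i; rewrite /f -pvalE -[pval _]/(val _) insubdK //; apply: siginj.
have fM : {in 'Gal(E / 1%VS)%g &, {morph f : x y / (x * y)%g}}.
  move=> g h gG hG; apply/permP => i; rewrite permM !fE ?groupM //.
  apply: nth_inj; rewrite !sigE ?groupM // galM //.
have finj : {in 'Gal(E / 1%VS)%g &, injective f}.
  move=> g h gG hG fgh.
  have grh : forall z, z \in r -> g z = h z.
    move=> z /(nthP 0) [i ilt <-].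
    have := congr1 (fun s : {perm 'I_3} => nth 0 r (s (Ordinal ilt))) fgh.
    by rewrite /= !fE // !sigE.
  apply/eqP/gal_eqP => x xE.
  set k := (g * h^-1)%g.
  have kz : forall z, z \in r -> k z = z.
    move=> z zr; have zE := rE z zr.
    by rewrite /k galM // grh // -galM // mulgV gal_id.
  have sub : (<<1 & r>> <= fixedField [set k])%VS.
    apply/Fadjoin_seqP; split; first exact: sub1v.
    move=> z zr; apply/fixedFieldP; first exact: rE.
    by move=> y /set1P ->; apply: kz.
  rewrite defE in sub.
  have [_ fx] := mem_fixedFieldP (subvP sub x xE).
  have kx := fx k (set11 k).
  rewrite /k galM // in kx.
  by rewrite -{2}kx -galM ?memv_gal // mulVg gal_id.
pose fm := Morphism fM.
have injf : ('injm fm)%g by apply/injmP.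
have cardim : #|(fm @* 'Gal(E / 1%VS))%g| = \dim E by rewrite card_injm // cardG.
have le6 : (\dim E <= 6)%N.
  rewrite -cardim (_ : 6%N = #|[set: {perm 'I_3}]|); last by rewrite cardsT card_Sn.
  exact/subset_leq_card/subsetT.
have dim6 : \dim E = 6%N.
  have := adim_gt0 E; move: d6 le6; case/dvdnP => k ->.
  by case: k => [|[|k]].
apply/isogP; exists fm => //.
by apply/eqP; rewrite eqEcard subsetT cardsT card_Sn cardim dim6.
Qed.
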